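(* Let $\Omega:\mathbb{Z}[VB_n]\to\mathbb{Z}[VP_n]\otimes\mathbb{Z}[S_n]$ be the $\mathbb{Z}$-linear map defined on group elements by $\Omega(v)=v\,\big(s(\nu(v))\big)^{-1}\otimes\nu(v)$; it is an isomorphism of $\mathbb{Z}$-algebras, where $\mathbb{Z}[VP_n]\otimes\mathbb{Z}[S_n]$ carries the algebra structure of $\mathbb{Z}[VP_n\rtimes S_n]$. Let $J$ be the two-sided ideal of $\mathbb{Z}[VB_n]$ generated by $\{\sigma_i-\rho_i \mid i=1,\dots,n-1\}$. Then for every integer $d\geq 1$, $\Omega$ maps $J^d$ isomorphically onto $I^d(VP_n)\otimes\mathbb{Z}[S_n]$.
   Context: The virtual braid group $VB_n$ is the group with generators $\sigma_i,\rho_i$ ($i=1,\dots,n-1$) and defining relations: $\sigma_i\sigma_{i+1}\sigma_i=\sigma_{i+1}\sigma_i\sigma_{i+1}$ ($1\le i\le n-2$); $\sigma_i\sigma_j=\sigma_j\sigma_i$ ($|i-j|\geq 2$); $\rho_i\rho_{i+1}\rho_i=\rho_{i+1}\rho_i\rho_{i+1}$ ($1\le i\le n-2$); $\rho_i\rho_j=\rho_j\rho_i$ ($|i-j|\geq 2$); $\rho_i^2=1$; $\sigma_i\rho_j=\rho_j\sigma_i$ ($|i-j|\geq2$); $\rho_i\rho_{i+1}\sigma_i=\sigma_{i+1}\rho_i\rho_{i+1}$ ($1\le i\le n-2$). $\nu:VB_n\to S_n$ is the homomorphism $\nu(\sigma_i)=\nu(\rho_i)=(i\ i{+}1)$, $VP_n=\ker\nu$,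 and $s:S_n\to VB_n$ is the homomorphic section $s((i\ i{+}1))=\rho_i$, so that $VB_n\cong VP_n\rtimes S_n$ via $v\mapsto(v\,(s(\nu(v)))^{-1},\nu(v))$. $I(VP_n)$ denotes the augmentation ideal of $\mathbb{Z}[VP_n]$ (the two-sided ideal generated by $\{g-1\mid g\in VP_n\}$), and $I^d(VP_n)$, $J^d$ denote $d$-th powers of ideals. *)

(* Defs.v *)
(* Group rings of (possibly infinite) groups are modelled by
   formal finite sums (lists of (coefficient, element) pairs) compared through
   their coefficient functions [fs]. *)
From HB Require Import structures.
From mathcomp Require Import all_boot all_order all_algebra all_fingroup.
Set Implicit Arguments. Unset Strict Implicit. Unset Printing Implicit Defensive.
Import GRing.Theory.
Local Open Scope ring_scope.

Definition is_group (T : Type) (m : T -> T -> T) (iv : T -> T) (e : T) : Prop :=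
  [/\ (forall x y z, m x (m y z) = m (m x y) z),
      (forall x, m e x = x), (forall x, m x e = x),
      (forall x, m (iv x) x = e) & (forall x, m x (iv x) = e)].

Definition is_hom (T U : Type) (mT : T -> T -> T) (mU : U -> U -> U) (f : T -> U) :=
  forall x y, f (mT x y) = mU (f x) (f y).

Definition far (i j : nat) : bool := (i.+2 <= j)%N || (j.+2 <= i)%N.

Definition vb_rels (n : nat) (T : Type) (m : T -> T -> T) (e : T)
    (sg rh : nat -> T) : Prop :=
  (forall i, (1 <= i <= n - 2)%N ->
          m (m (sg i) (sg i.+1)) (sg i) = m (m (sg i.+1) (sg i)) (sg i.+1)) /\
      (forall i j, (1 <= i <= n - 1)%N -> (1 <= j <= n - 1)%N -> far i j ->
          m (sg i) (sg j) = m (sg j) (sg i)) /\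
      (forall i, (1 <= i <= n - 2)%N ->
          m (m (rh i) (rh i.+1)) (rh i) = m (m (rh i.+1) (rh i)) (rh i.+1)) /\
      (forall i j, (1 <= i <= n - 1)%N -> (1 <= j <= n - 1)%N -> far i j ->
          m (rh i) (rh j) = m (rh j) (rh i)) /\
      (forall i, (1 <= i <= n - 1)%N -> m (rh i) (rh i) = e) /\
      (forall i j, (1 <= i <= n - 1)%N -> (1 <= j <= n - 1)%N -> far i j ->
          m (sg i) (rh j) = m (rh j) (sg i)) /\
      (forall i, (1 <= i <= n - 2)%N ->
          m (m (rh i) (rh i.+1)) (sg i) = m (sg i.+1) (m (rh i) (rh i.+1))).

(* words in the generators: (inverted?, is_rho?, index) *)
Definition eval_word (T : Type) (m : T -> T -> T) (iv : T -> T) (e : T)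
    (sg rh : nat -> T) (w : seq (bool * bool * nat)) : T :=
  foldr (fun l acc =>
           let g := if l.1.2 then rh l.2 else sg l.2 in
           m (if l.1.1 then iv g else g) acc) e w.

Definition presents_VB (n : nat) (G : Type) (m : G -> G -> G) (iv : G -> G) (e : G)
    (sg rh : nat -> G) : Prop :=
  [/\ vb_rels n m e sg rh,
      (forall g, exists w : seq (bool * bool * nat),
          all (fun l => (1 <= l.2 <= n - 1)%N) w /\ g = eval_word m iv e sg rh w) &
      (forall (K : Type) (mK : K -> K -> K) (iK : K -> K) (eK : K),
          is_group mK iK eK -> forall sK rK : nat -> K, vb_rels n mK eK sK rK ->
          exists f : G -> K, is_hom m mK f /\
            (forall i, (1 <= i <= n - 1)%N -> f (sg i) = sK i /\ f (rh i) = rK i))].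

(* the transposition (i i+1) of {1..n}, i.e. tperm (i-1) i on 'I_n (0-based) *)
Definition str (n i : nat) : 'S_n :=
  match @insub _ (fun k => (k < n)%N) 'I_n i.-1, @insub _ (fun k => (k < n)%N) 'I_n i with
  | Some a, Some b => tperm a b
  | _, _ => 1%g
  end.

Definition fsum (T : Type) := seq (int * T).

Definition fs (T : eqType) (l : fsum T) : T -> int :=
  fun g => \sum_(p <- l | p.2 == g) p.1.

Definition negL (T : Type) (l : fsum T) : fsum T := [seq (- p.1, p.2) | p <- l].

Definition mulL (T : Type) (m : T -> T -> T) (a b : fsum T) : fsum T :=
  [seq (p.1 * q.1, m p.2 q.2) | p <- a, q <- b].

Inductive zspan (T : eqType) (S : fsum T -> Prop) : fsum T -> Prop :=
  | zs_gen a : S a -> zspan S a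
  | zs_nil : zspan S [::]
  | zs_add a b : zspan S a -> zspan S b -> zspan S (a ++ b)
  | zs_neg a : zspan S a -> zspan S (negL a)
  | zs_ext a b : fs a = fs b -> zspan S a -> zspan S b.

Definition supp_in (T : Type) (H : pred T) (x : fsum T) : bool :=
  all (fun p => H p.2) x.

Definition ideal_gen (T : eqType) (m : T -> T -> T) (H : pred T)
    (S : fsum T -> Prop) : fsum T -> Prop :=
  zspan (fun l => exists x a y, [/\ supp_in H x, S a, supp_in H y &
                                   l = mulL m x (mulL m a y)]).

Definition ideal_mul (T : eqType) (m : T -> T -> T) (I K : fsum T -> Prop) :=
  zspan (fun l => exists a b, [/\ I a, K b & l = mulL m a b]).

(* ideal power I^d for d >= 1 (the value at d = 0 is a dummy, equal to I) *)
Fixpoint ideal_pow (T : eqType) (m : T -> T -> T) (I : fsum T -> Prop) (d : nat)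
  : fsum T -> Prop :=
  match d with
  | 0 | 1 => I
  | d'.+1 => ideal_mul m (ideal_pow m I d') I
  end.

(* Z[A] (x) Z[B] realised as Z[A * B]; tensor of formal sums *)
Definition tens (A B : Type) (a : fsum A) (b : fsum B) : fsum (A * B) :=
  [seq (p.1 * q.1, (p.2, q.2)) | p <- a, q <- b].

Definition tens_ideal (A B : eqType) (I : fsum A -> Prop) : fsum (A * B) -> Prop :=
  zspan (fun l => exists a (z : fsum B), I a /\ l = tens a z).

Definition Jideal (n : nat) (G : eqType) (m : G -> G -> G) (sg rh : nat -> G) :=
  ideal_gen m predT
    (fun l => exists i, (1 <= i <= n - 1)%N /\ l = [:: (1%:Z, sg i); (-1, rh i)]).

(* augmentation ideal I(VP_n) of Z[VP_n], VP_n = ker nu *)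
Definition aug_VP (n : nat) (G : eqType) (m : G -> G -> G) (e : G) (nu : G -> 'S_n) :=
  ideal_gen m (fun g => nu g == 1%g)
    (fun l => exists g, nu g = 1%g /\ l = [:: (1%:Z, g); (-1, e)]).

Definition Omega (n : nat) (G : Type) (m : G -> G -> G) (iv : G -> G)
    (nu : G -> 'S_n) (s : 'S_n -> G) (l : fsum G) : fsum (G * 'S_n) :=
  [seq (p.1, (m p.2 (iv (s (nu p.2))), nu p.2)) | p <- l].

(* Main.v *)
Require Import Defs.
From HB Require Import structures.
From mathcomp Require Import all_boot all_order all_algebra all_fingroup.
Local Open Scope ring_scope.
From mathcomp Require Import ring zify.
From Stdlib Require Import FunctionalExtensionality.
Set Implicit Arguments. Unset Strict Implicit. Unset Printing Implicit Defensive.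
Import GRing.Theory.
Definition ev (T : Type) (c : T -> int) (a : fsum T) : int := \sum_(p <- a) p.1 * c p.2.

Lemma ev_nil T (c : T -> int) : ev c [::] = 0.
Proof. by rewrite /ev big_nil. Qed.
Lemma ev_cons T (c : T -> int) p a : ev c (p :: a) = p.1 * c p.2 + ev c a.
Proof. by rewrite /ev big_cons. Qed.
Lemma ev_cat T (c : T -> int) a b : ev c (a ++ b) = ev c a + ev c b.
Proof. by rewrite /ev big_cat. Qed.
Lemma ev_negL T (c : T -> int) a : ev c (negL a) = - ev c a.
Proof. elim: a => [|p a IH]; rewrite ?ev_nil ?oppr0 //= !ev_cons IH /=; ring. Qed.
Lemma ev_map T U (c : U -> int) (k : int) (f : T -> U) a :
  ev c [seq (k * p.1, f p.2) | p <- a] = k * ev (fun g => c (f g)) a.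
Proof. elim: a => [|p a IH]; rewrite /= ?ev_nil ?mulr0 // !ev_cons IH /=; ring. Qed.
Lemma ev_map1 T U (c : U -> int) (f : T -> U) a :
  ev c [seq (p.1, f p.2) | p <- a] = ev (fun g => c (f g)) a.
Proof. elim: a => [|p a IH]; rewrite /= ?ev_nil // !ev_cons IH //. Qed.
Lemma ev_ext T (c c' : T -> int) a : c =1 c' -> ev c a = ev c' a.
Proof. by move=> E; apply: eq_bigr => p _; rewrite E. Qed.
Lemma ev_supp T (P : pred T) (c c' : T -> int) a :
  supp_in P a -> (forall g, P g -> c g = c' g) -> ev c a = ev c' a.
Proof.
rewrite /supp_in; elim: a => [|p a IH] /=; first by rewrite !ev_nil.
move=> /andP[Pp Pa] E; rewrite !ev_cons IH // E //.
Qed.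
Lemma ev_add T (c c' : T -> int) a : ev (fun g => c g + c' g) a = ev c a + ev c' a.
Proof. by rewrite /ev -big_split; apply: eq_bigr => p _; rewrite mulrDr. Qed.
Lemma ev_scal T (c : T -> int) k a : ev (fun g => k * c g) a = k * ev c a.
Proof. by rewrite /ev mulr_sumr; apply: eq_bigr => p _; rewrite mulrCA. Qed.
Lemma ev_zero T a : ev (fun _ : T => 0) a = 0.
Proof. by rewrite /ev big1 // => p _; rewrite mulr0. Qed.

Lemma mulL_cons T (m : T -> T -> T) p a b :
  mulL m (p :: a) b = [seq (p.1 * q.1, m p.2 q.2) | q <- b] ++ mulL m a b.
Proof. by []. Qed.

Lemma ev_mulL T (m : T -> T -> T) (c : T -> int) a b :
  ev c (mulL m a b) = ev (fun g => ev (fun h => c (m g h)) b) a.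
Proof.
elim: a => [|p a IH]; first by rewrite /mulL /= !ev_nil.
by rewrite mulL_cons ev_cat IH ev_cons (ev_map c p.1 (m p.2)).
Qed.

Lemma tens_cons A B (p : int * A) a (b : fsum B) :
  tens (p :: a) b = [seq (p.1 * q.1, (p.2, q.2)) | q <- b] ++ tens a b.
Proof. by []. Qed.

Lemma ev_tens A B (c : A * B -> int) a b :
  ev c (tens a b) = ev (fun g => ev (fun h => c (g, h)) b) a.
Proof.
elim: a => [|p a IH]; first by rewrite /tens /= !ev_nil.
by rewrite tens_cons ev_cat IH ev_cons (ev_map c p.1 (pair p.2)).
Qed.

Lemma fsE (T : eqType) (l : fsum T) g : fs l g = ev (fun h => (h == g)%:R) l.
Proof.
rewrite /fs /ev big_mkcond; apply: eq_bigr => p _.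
by case: eqP => _; rewrite ?mulr1 ?mulr0.
Qed.

Lemma ev_uniq (T : eqType) (U : seq T) (a : fsum T) c :
  uniq U -> {subset map snd a <= U} -> ev c a = \sum_(g <- U) fs a g * c g.
Proof.
move=> uU; elim: a => [|p a IH] sub.
  by rewrite ev_nil big1 // => g _; rewrite /fs big_nil mul0r.
rewrite ev_cons IH; last by move=> x xa; apply: sub; rewrite /= inE xa orbT.
have pU : p.2 \in U by apply: sub; rewrite /= inE eqxx.
have E g : fs (p :: a) g * c g = p.1 * ((p.2 == g)%:R * c g) + fs a g * c g.
  by rewrite !fsE ev_cons mulrDl mulrA.
rewrite (eq_bigr _ (fun g _ => E g)) big_split /=; congr (_ + _).
rewrite -mulr_sumr; congr (_ * _).
rewrite (bigD1_seq p.2) //= eqxx mul1r big1 ?addr0 // => g /negbTE ne.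
by rewrite eq_sym ne mul0r.
Qed.

Lemma fs_ev (T : eqType) (a b : fsum T) c : fs a = fs b -> ev c a = ev c b.
Proof.
move=> E; set U := undup (map snd (a ++ b)).
have uU : uniq U by apply: undup_uniq.
rewrite (ev_uniq c uU) ?(ev_uniq c uU) ?E // => x xa; rewrite mem_undup map_cat mem_cat xa ?orbT //.
Qed.

Lemma ev_fs (T : eqType) (a b : fsum T) : (forall c, ev c a = ev c b) -> fs a = fs b.
Proof. by move=> E; apply: functional_extensionality => g; rewrite !fsE E. Qed.

Lemma zspan_ext (T : eqType) (S : fsum T -> Prop) a b :
  (forall c, ev c a = ev c b) -> zspan S a -> zspan S b.
Proof. by move=> E; apply: zs_ext; apply: ev_fs. Qed.

Lemma zspan_map (T U : eqType) (S : fsum T -> Prop) (S' : fsum U -> Prop)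
  (F : fsum T -> fsum U) (Phi : (U -> int) -> (T -> int)) :
  (forall c a, ev c (F a) = ev (Phi c) a) -> (forall a, S a -> zspan S' (F a)) ->
  forall x, zspan S x -> zspan S' (F x).
Proof.
move=> HF HS x; elim => {x} [a Sa | | a b _ IHa _ IHb | a _ IH | a b E _ IH].
- exact: HS.
- by apply: zspan_ext (zs_nil _) => c; rewrite HF !ev_nil.
- by apply: zspan_ext (zs_add IHa IHb) => c; rewrite HF !ev_cat !HF.
- by apply: zspan_ext (zs_neg IH) => c; rewrite HF !ev_negL !HF.
- by apply: zspan_ext IH => c; rewrite !HF; apply: fs_ev.
Qed.

Lemma zspan_mono (T : eqType) (S S' : fsum T -> Prop) :
  (forall a, S a -> zspan S' a) -> forall x, zspan S x -> zspan S' x.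
Proof. by move=> H x; apply: (@zspan_map _ _ S S' id id) => //. Qed.

Definition scale (T : Type) (k : int) (a : fsum T) := [seq (k * p.1, p.2) | p <- a].
Lemma ev_scale T (c : T -> int) k a : ev c (scale k a) = k * ev c a.
Proof. by rewrite /scale (ev_map c k id). Qed.

Lemma zspan_scale (T : eqType) (S : fsum T -> Prop) k a :
  zspan S a -> zspan S (scale k a).
Proof.
move=> Ha.
have P n : zspan S (scale n%:Z a).
  elim: n => [|n IH].
    by apply: zspan_ext (zs_nil _) => c; rewrite ev_scale ev_nil mul0r.
  apply: zspan_ext (zs_add Ha IH) => c; rewrite ev_scale ev_cat ev_scale.
  by rewrite -[n.+1]addn1 PoszD mulrDl mul1r addrC.
case: k => [n|n]; first exact: P.
apply: zspan_ext (zs_neg (P n.+1)) => c; rewrite ev_negL !ev_scale NegzE.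
by rewrite mulNr.
Qed.

Lemma mulLA (T : Type) (m : T -> T -> T) (mA : forall x y z, m x (m y z) = m (m x y) z)
  c a b w : ev c (mulL m (mulL m a b) w) = ev c (mulL m a (mulL m b w)).
Proof.
rewrite !ev_mulL; apply: ev_ext => g1 /=; rewrite ev_mulL.
by apply: ev_ext => g2; apply: ev_ext => h; rewrite mA.
Qed.

Lemma ev_mulL' (T : Type) (m : T -> T -> T) (c : T -> int) a b :
  ev c (mulL m a b) = ev (fun h => ev (fun g => c (m g h)) a) b.
Proof.
elim: a => [|p a IH]; first by rewrite /mulL /= ev_nil; under ev_ext => h do rewrite ev_nil; rewrite ev_zero.
rewrite mulL_cons ev_cat IH (ev_map c p.1 (m p.2)) -ev_scal -ev_add.
by apply: ev_ext => h; rewrite ev_cons.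
Qed.

Lemma ev_congr_r (T : Type) (m : T -> T -> T) c a b b' :
  (forall c, ev c b = ev c b') -> ev c (mulL m a b) = ev c (mulL m a b').
Proof. by move=> E; rewrite !ev_mulL; apply: ev_ext => g; apply: E. Qed.
Lemma ev_congr_l (T : Type) (m : T -> T -> T) c a a' b :
  (forall c, ev c a = ev c a') -> ev c (mulL m a b) = ev c (mulL m a' b).
Proof. by move=> E; rewrite !ev_mulL'; apply: ev_ext => g; apply: E. Qed.

Lemma supp_mulL (T : Type) (m : T -> T -> T) (H : pred T)
  (Hm : forall x y, H x -> H y -> H (m x y)) a b :
  supp_in H a -> supp_in H b -> supp_in H (mulL m a b).
Proof.
rewrite /supp_in; elim: a => [|p a IH] //= /andP[Hp Ha] Hb.
rewrite mulL_cons all_cat IH // andbT all_map.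
clear IH; elim: b Hb => //= q b IHb /andP[Hq Hb]; by rewrite Hm // IHb.
Qed.

Lemma supp_T (T : Type) (a : fsum T) : supp_in predT a.
Proof. by rewrite /supp_in; elim: a. Qed.

Lemma ideal_gen_mulr (T : eqType) (m : T -> T -> T) (H : pred T) S
  (mA : forall x y z, m x (m y z) = m (m x y) z)
  (Hm : forall x y, H x -> H y -> H (m x y)) w :
  supp_in H w -> forall x, ideal_gen m H S x -> ideal_gen m H S (mulL m x w).
Proof.
move=> Hw x; apply: (zspan_map (F := fun a => mulL m a w) (Phi := fun c g => ev (fun h => c (m g h)) w)).
  by move=> c a; rewrite ev_mulL.
move=> _ [x0 [a [y0 [Hx Sa Hy ->]]]].
have Hg : ideal_gen m H S (mulL m x0 (mulL m a (mulL m y0 w))).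
  by apply: zs_gen; exists x0, a, (mulL m y0 w); split => //; exact: supp_mulL.
by apply: zspan_ext Hg => c; rewrite (mulLA mA); apply: ev_congr_r => c'; rewrite (mulLA mA).
Qed.

Lemma ideal_gen_mull (T : eqType) (m : T -> T -> T) (H : pred T) S
  (mA : forall x y z, m x (m y z) = m (m x y) z)
  (Hm : forall x y, H x -> H y -> H (m x y)) w :
  supp_in H w -> forall x, ideal_gen m H S x -> ideal_gen m H S (mulL m w x).
Proof.
move=> Hw x; apply: (zspan_map (F := fun a => mulL m w a) (Phi := fun c h => ev (fun g => c (m g h)) w)).
  by move=> c a; rewrite ev_mulL'.
move=> _ [x0 [a [y0 [Hx Sa Hy ->]]]].
have Hg : ideal_gen m H S (mulL m (mulL m w x0) (mulL m a y0)).
  by apply: zs_gen; exists (mulL m w x0), a, y0; split => //; exact: supp_mulL.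
by apply: zspan_ext Hg => c; rewrite !(mulLA mA).
Qed.

Lemma strE n (x y : 'I_n) : val y = (val x).+1 -> str n y = tperm x y.
Proof.
move=> E; rewrite /str E /=.
case: insubP => [a _ Ha|]; last by rewrite ltn_ord.
case: insubP => [b _ Hb|]; last by rewrite -E ltn_ord.
by congr tperm; apply: val_inj; rewrite ?Ha ?Hb.
Qed.

Lemma perm_adj_id n (phi : 'S_n -> 'S_n) :
  (forall p q, phi (p * q)%g = (phi p * phi q)%g) ->
  (forall i, (1 <= i <= n - 1)%N -> phi (str n i) = str n i) -> forall p, phi p = p.
Proof.
move=> hom hstr.
have phi1 : phi 1%g = 1%g by apply: (mulgI (phi 1%g)); rewrite -hom !mulg1.
have adj (x y : 'I_n) : val y = (val x).+1 -> phi (tperm x y) = tperm x y.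
  move=> E; rewrite -(strE E) hstr // E /=.
  by move: (ltn_ord y); rewrite E; case: x {E} => /= x' _; lia.
have gen k : forall x y : 'I_n, val y = (val x + k.+1)%N -> phi (tperm x y) = tperm x y.
  elim: k => [|k IH] x y E; first by apply: adj; rewrite E addn1.
  have zn : ((val y).-1 < n)%N by apply: leq_ltn_trans (leq_pred _) (ltn_ord y).
  pose z : 'I_n := Ordinal zn.
  have Ez : val z = (val x + k.+1)%N by rewrite /= E addnS.
  have Ey : val y = (val z).+1 by rewrite Ez E addnS.
  have nxz : z != x by apply/eqP => /(congr1 val); rewrite Ez -{2}[val x]addn0 => /eqP; rewrite eqn_add2l.
  have nxy : y != x by apply/eqP => /(congr1 val); rewrite E -{2}[val x]addn0 => /eqP; rewrite eqn_add2l.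
  have E2 : tperm x y = ((tperm x z) ^ (tperm z y))%g.
    by rewrite tpermJ tpermL tpermD // eq_sym.
  by rewrite E2 conjgE tpermV !hom (IH x z) // (adj z y).
have tp (x y : 'I_n) : phi (tperm x y) = tperm x y.
  wlog le : x y / (val x <= val y)%N.
    move=> W; case: (leqP x y) => [|/ltnW] h; first exact: W.
    by rewrite tpermC W.
  case: (ltngtP x y) le => // [lt|eq] _.
    have := subnK lt; rewrite -addSnnS addnC => /esym.
    set k := (_ - _)%N; exact: gen.
  by rewrite (val_inj eq) tperm1.
move=> p; have [ts -> _] := prod_tpermP p.
elim: ts => [|t ts IH]; first by rewrite big_nil.
by rewrite big_cons hom IH tp.
Qed.

Ltac evsimp := do 6 (rewrite ?ev_cat ?ev_mulL ?ev_cons ?ev_nil ?ev_negL ?ev_tens /=).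

Definition Rt (T : Type) (m : T -> T -> T) (h : T) (a : fsum T) :=
  [seq (p.1, m p.2 h) | p <- a].
Definition Cj (T : Type) (m : T -> T -> T) (iv : T -> T) (g : T) (a : fsum T) :=
  [seq (p.1, m (m g p.2) (iv g)) | p <- a].

Lemma ev_Rt (T : Type) (m : T -> T -> T) h c a :
  ev c (Rt m h a) = ev (fun g => c (m g h)) a.
Proof. exact: (ev_map1 c (fun g => m g h)). Qed.
Lemma ev_Cj (T : Type) (m : T -> T -> T) iv g c a :
  ev c (Cj m iv g a) = ev (fun x => c (m (m g x) (iv g))) a.
Proof. exact: (ev_map1 c (fun x => m (m g x) (iv g))). Qed.
Lemma ev_Omega n (G : eqType) (m : G -> G -> G) iv (nu : G -> 'S_n) s c a :
  ev c (Omega m iv nu s a) = ev (fun v => c (m v (iv (s (nu v))), nu v)) a.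
Proof. exact: (ev_map1 c (fun v => (m v (iv (s (nu v))), nu v))). Qed.

Lemma supp_map (T : Type) (P : pred T) (f : T -> T) a :
  supp_in P a -> (forall g, P g -> P (f g)) -> supp_in P [seq (p.1, f p.2) | p <- a].
Proof.
rewrite /supp_in; elim: a => [|p a IH] //= /andP[Pp Pa] Hf.
by rewrite Hf // IH.
Qed.

Lemma supp_cat (T : Type) (P : pred T) a b :
  supp_in P a -> supp_in P b -> supp_in P (a ++ b).
Proof. by rewrite /supp_in all_cat => -> ->. Qed.

Lemma supp_negL (T : Type) (P : pred T) a : supp_in P a -> supp_in P (negL a).
Proof. by rewrite /supp_in /negL all_map. Qed.

Lemma zspan_rep (T : eqType) (H : pred T) (S : fsum T -> Prop) :
  (forall a, S a -> exists a', supp_in H a' /\ forall c, ev c a' = ev c a) ->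
  forall x, zspan S x -> exists x', supp_in H x' /\ forall c, ev c x' = ev c x.
Proof.
move=> HS x; elim => {x} [a Sa | | a b _ [a' [Ha Ea]] _ [b' [Hb Eb]] | a _ [a' [Ha Ea]]
   | a b E _ [a' [Ha Ea]]].
- exact: HS.
- by exists [::].
- by exists (a' ++ b'); split; [apply: supp_cat | move=> c; rewrite !ev_cat Ea Eb].
- by exists (negL a'); split; [apply: supp_negL | move=> c; rewrite !ev_negL Ea].
- by exists a'; split => // c; rewrite Ea; apply: fs_ev.
Qed.

Lemma pow_ext (T : eqType) (m : T -> T -> T) S d a b :
  (forall c, ev c a = ev c b) -> ideal_pow m (zspan S) d a -> ideal_pow m (zspan S) d b.
Proof. by case: d => [|[|d]] /=; apply: zspan_ext. Qed.
Lemma pow_nil (T : eqType) (m : T -> T -> T) S d : ideal_pow m (zspan S) d [::].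
Proof. by case: d => [|[|d]] /=; apply: zs_nil. Qed.
Lemma pow_add (T : eqType) (m : T -> T -> T) S d a b :
  ideal_pow m (zspan S) d a -> ideal_pow m (zspan S) d b -> ideal_pow m (zspan S) d (a ++ b).
Proof. by case: d => [|[|d]] /=; apply: zs_add. Qed.
Lemma pow_neg (T : eqType) (m : T -> T -> T) S d a :
  ideal_pow m (zspan S) d a -> ideal_pow m (zspan S) d (negL a).
Proof. by case: d => [|[|d]] /=; apply: zs_neg. Qed.

Lemma ev_Rt_mulL (T : Type) (m : T -> T -> T)
  (mA : forall x y z, m x (m y z) = m (m x y) z) h c a b :
  ev c (Rt m h (mulL m a b)) = ev c (mulL m a (Rt m h b)).
Proof.
rewrite ev_Rt !ev_mulL; apply: ev_ext => g /=.
by rewrite ev_Rt; apply: ev_ext => k; rewrite mA.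
Qed.

Lemma conjM (T : Type) (m : T -> T -> T) iv e : is_group m iv e ->
  forall g a b, m (m g (m a b)) (iv g) = m (m (m g a) (iv g)) (m (m g b) (iv g)).
Proof.
move=> [mA m1l m1r mVl mVr] g a b.
by rewrite !mA -[m (m (m g a) (iv g)) g]mA mVl m1r.
Qed.

Lemma ev_Cj_mulL (T : Type) (m : T -> T -> T) iv e : is_group m iv e ->
  forall g c a b, ev c (Cj m iv g (mulL m a b)) = ev c (mulL m (Cj m iv g a) (Cj m iv g b)).
Proof.
move=> gG g c a b.
rewrite ev_Cj !ev_mulL ev_Cj; apply: ev_ext => u /=.
by rewrite ev_Cj; apply: ev_ext => v; rewrite (conjM gG).
Qed.

Unset Implicit Arguments.

Theorem proposition8p2 (n : nat) (G : eqType) (m : G -> G -> G) (iv : G -> G)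
    (e : G) (sg rh : nat -> G) (nu : G -> 'S_n) (s : 'S_n -> G) :
  is_group m iv e ->
  presents_VB n m iv e sg rh ->
  is_hom m (fun p q : 'S_n => (p * q)%g) nu ->
  (forall i, (1 <= i <= n - 1)%N -> nu (sg i) = str n i /\ nu (rh i) = str n i) ->
  is_hom (fun p q : 'S_n => (p * q)%g) m s ->
  (forall i, (1 <= i <= n - 1)%N -> s (str n i) = rh i) ->
  forall d : nat, (1 <= d)%N ->
  [/\ (forall x, ideal_pow m (Jideal n m sg rh) d x ->
         tens_ideal (ideal_pow m (aug_VP m e nu) d) (Omega m iv nu s x)),
      (forall y, tens_ideal (ideal_pow m (aug_VP m e nu) d) y ->
         exists x, ideal_pow m (Jideal n m sg rh) d x /\ fs (Omega m iv nu s x) = fs y) &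
      (forall x x', fs (Omega m iv nu s x) = fs (Omega m iv nu s x') -> fs x = fs x')].
Proof.
move=> [mA m1l m1r mVl mVr] [rels gen _] hnu nuE hs sE d _.
have ivE a b : m a b = e -> a = iv b.
  by move=> h; rewrite -[a]m1r -(mVr b) mA h m1l.
have nu1 : nu e = 1%g by apply: (mulgI (nu e)); rewrite -hnu m1l mulg1.
have nuV g : nu (iv g) = ((nu g)^-1)%g.
  by apply: (mulIg (nu g)); rewrite -hnu mVl nu1 mulVg.
have s1 : s 1%g = e.
  have h := hs 1%g 1%g; rewrite mulg1 in h.
  by rewrite -[RHS](mVl (s 1%g)) {3}h mA mVl m1l.
have sV p : s (p^-1)%g = iv (s p) by apply: ivE; rewrite -hs mulVg s1.
have nus p : nu (s p) = p.
  apply: (@perm_adj_id n (fun p => nu (s p))) => [p1 p2|i hi]; first by rewrite hs hnu.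
  by rewrite sE // (nuE i hi).2.
pose VP := fun g => nu g == 1%g.
have VPm x y : VP x -> VP y -> VP (m x y).
  by rewrite /VP hnu => /eqP -> /eqP ->; rewrite mulg1.
have VPc g x : VP x -> VP (m (m g x) (iv g)).
  by rewrite /VP !hnu nuV => /eqP ->; rewrite mulg1 mulgV.
pose J := Jideal n m sg rh.
have Jr w x : J x -> J (mulL m x w).
  exact: (ideal_gen_mulr mA (fun _ _ _ _ => isT) (supp_T w)).
have Jl w x : J x -> J (mulL m w x).
  exact: (ideal_gen_mull mA (fun _ _ _ _ => isT) (supp_T w)).
have Jsg i : (1 <= i <= n - 1)%N -> J [:: (1, sg i); (-1, rh i)].
  move=> hi.
  have H : J (mulL m [:: (1, e)] (mulL m [:: (1, sg i); (-1, rh i)] [:: (1, e)])).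
    apply: zs_gen; exists [:: (1, e)], [:: (1, sg i); (-1, rh i)], [:: (1, e)].
    by split => //; exists i.
  by apply: zspan_ext H => c; evsimp; rewrite !m1l !m1r; ring.
have base (b : bool) i : (1 <= i <= n - 1)%N ->
    J [:: (1, if b then rh i else sg i); (-1, s (nu (if b then rh i else sg i)))].
  move=> hi; have [h1 h2] := nuE i hi; case: b.
    by apply: zspan_ext (zs_nil _) => c; evsimp; rewrite h2 sE //; ring.
  by rewrite h1 sE //; apply: Jsg.
have invJ h : J [:: (1, h); (-1, s (nu h))] -> J [:: (1, iv h); (-1, s (nu (iv h)))].
  move=> H; have H' := Jr [:: (1, iv (s (nu h)))] _ (Jl [:: (-1, iv h)] _ H).
  apply: zspan_ext H' => c; evsimp.
  rewrite mVl m1l -mA mVr m1r nuV sV; ring.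
have Jgen g : J [:: (1, g); (-1, s (nu g))].
  have [w [wall ->]] := gen g.
  elim: w wall => [|l w IH].
    by move=> _; apply: zspan_ext (zs_nil _) => c; evsimp; rewrite nu1 s1; ring.
  case/andP => hl hw.
  set g' := eval_word m iv e sg rh w in IH *.
  have -> : eval_word m iv e sg rh (l :: w) = m (if l.1.1 then iv (if l.1.2 then rh l.2 else sg l.2) else (if l.1.2 then rh l.2 else sg l.2)) g' by [].
  set h := (if l.1.1 then _ else _).
  have hJ : J [:: (1, h); (-1, s (nu h))].
    rewrite /h; case: (l.1.1); last exact: base.
    by apply: invJ; apply: base.
  have H := zs_add (Jl [:: (1, h)] _ (IH hw)) (Jr [:: (1, s (nu g'))] _ hJ).
  apply: zspan_ext H => c; evsimp; rewrite hnu hs; ring.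
pose I := aug_VP m e nu.
have VPe : VP e by rewrite /VP nu1.
have IJ x : I x -> J x.
  apply: zspan_mono => _ [x0 [a [y0 [_ [g [hg ->]] _ ->]]]].
  apply: Jl; apply: Jr; have := Jgen g; by rewrite hg s1.
have IJpow dd x : ideal_pow m I dd x -> ideal_pow m J dd x.
  elim: dd x => [|[|dd] IH] x; [exact: IJ | exact: IJ |].
  apply: zspan_mono => _ [a [b [Ha Hb ->]]]; apply: zs_gen; exists a, b; split => //.
    exact: IH.
  exact: IJ.
have Jpowr dd w x : ideal_pow m J dd x -> ideal_pow m J dd (mulL m x w).
  case: dd => [|[|dd]]; [exact: Jr | exact: Jr |].
  apply: (zspan_map (F := fun a => mulL m a w) (Phi := fun c g => ev (fun h => c (m g h)) w)).
    by move=> c a; rewrite ev_mulL.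
  move=> _ [a [b [Ha Hb ->]]].
  have H : ideal_pow m J dd.+2 (mulL m a (mulL m b w)).
    by apply: zs_gen; exists a, (mulL m b w); split => //; apply: Jr.
  by apply: zspan_ext H => c; rewrite (mulLA mA).
have Irep dd a : ideal_pow m I dd a -> exists a', supp_in VP a' /\ forall c, ev c a' = ev c a.
  have Irep0 a0 : I a0 -> exists a', supp_in VP a' /\ forall c, ev c a' = ev c a0.
    rewrite /I /aug_VP /ideal_gen; apply: zspan_rep => _ [x0 [a1 [y0 [Hx [g [hg ->]] Hy ->]]]].
    exists (mulL m x0 (mulL m [:: (1, g); (-1, e)] y0)); split => //.
    apply: supp_mulL => //; apply: supp_mulL => //; rewrite /supp_in /= VPe /VP hg eqxx //.
  elim: dd a => [|[|dd] IH] a; [exact: Irep0 | exact: Irep0 |].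
  apply: zspan_rep => _ [a0 [b0 [Ha Hb ->]]].
  have [a' [Ha' Ea]] := IH _ Ha.
  have [b' [Hb' Eb]] := Irep0 _ Hb.
  exists (mulL m a' b'); split; first exact: supp_mulL.
  by move=> c; rewrite (ev_congr_l _ _ _ Ea) (ev_congr_r _ _ _ Eb).
have IR h dd a : VP h -> ideal_pow m I dd a -> ideal_pow m I dd (Rt m h a).
  move=> hV.
  have IR0 a0 : I a0 -> I (Rt m h a0).
    rewrite /I /aug_VP /ideal_gen.
    apply: (zspan_map (F := Rt m h) (Phi := fun c g => c (m g h))) => [c a1|]; first exact: ev_Rt.
    move=> _ [x0 [a1 [y0 [Hx Sa Hy ->]]]].
    apply: (zspan_ext (a := mulL m x0 (mulL m a1 (Rt m h y0)))); last first.
      apply: zs_gen; exists x0, a1, (Rt m h y0); split => //.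
      by apply: (supp_map (f := fun g => m g h)) => // g hg; apply: VPm.
    move=> c; rewrite (ev_Rt_mulL mA); apply: ev_congr_r => c'.
    by rewrite (ev_Rt_mulL mA).
  elim: dd a => [|[|dd] IH] a; [exact: IR0 | exact: IR0 |].
  apply: (zspan_map (F := Rt m h) (Phi := fun c g => c (m g h))) => [c a1|]; first exact: ev_Rt.
  move=> _ [a0 [b0 [Ha Hb ->]]].
  apply: (zspan_ext (a := mulL m a0 (Rt m h b0))); last first.
    by apply: zs_gen; exists a0, (Rt m h b0); split => //; apply: IR0.
  by move=> c; rewrite (ev_Rt_mulL mA).
have gG : is_group m iv e by [].
have IC g dd a : ideal_pow m I dd a -> ideal_pow m I dd (Cj m iv g a).
  have IC0 a0 : I a0 -> I (Cj m iv g a0).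
    rewrite /I /aug_VP /ideal_gen.
    apply: (zspan_map (F := Cj m iv g) (Phi := fun c x => c (m (m g x) (iv g)))) => [c a1|].
      exact: ev_Cj.
    move=> _ [x0 [a1 [y0 [Hx [k [hk ->]] Hy ->]]]].
    apply: (zspan_ext (a := mulL m (Cj m iv g x0)
       (mulL m [:: (1, m (m g k) (iv g)); (-1, e)] (Cj m iv g y0)))); last first.
      apply: zs_gen; exists (Cj m iv g x0), [:: (1, m (m g k) (iv g)); (-1, e)], (Cj m iv g y0).
      split.
      - by apply: (supp_map (f := fun x => m (m g x) (iv g))) => // x hx; apply: VPc.
      - by exists (m (m g k) (iv g)); split => //; apply/eqP; apply: VPc; rewrite /VP hk.
      - by apply: (supp_map (f := fun x => m (m g x) (iv g))) => // x hx; apply: VPc.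
      - by [].
    move=> c; rewrite (ev_Cj_mulL gG); apply: ev_congr_r => c'.
    rewrite (ev_Cj_mulL gG); apply: ev_congr_l => c''.
    by evsimp; rewrite m1r mVr.
  elim: dd a => [|[|dd] IH] a; [exact: IC0 | exact: IC0 |].
  apply: (zspan_map (F := Cj m iv g) (Phi := fun c x => c (m (m g x) (iv g)))) => [c a1|].
    exact: ev_Cj.
  move=> _ [a0 [b0 [Ha Hb ->]]].
  apply: (zspan_ext (a := mulL m (Cj m iv g a0) (Cj m iv g b0))); last first.
    by apply: zs_gen; exists (Cj m iv g a0), (Cj m iv g b0); split => //; [apply: IH|apply: IC0].
  by move=> c; rewrite (ev_Cj_mulL gG).
pose M dd := zspan (fun l => exists a h, ideal_pow m I dd a /\ l = Rt m h a).
have Mr dd w x : M dd x -> M dd (mulL m x w).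
  apply: (zspan_map (F := fun a => mulL m a w) (Phi := fun c g => ev (fun h => c (m g h)) w)).
    by move=> c a; rewrite ev_mulL.
  move=> _ [a [h [Ha ->]]].
  elim: w => [|q w IH].
    by apply: zspan_ext (zs_nil _) => c; rewrite ev_mulL' !ev_nil.
  have H0 : M dd (Rt m (m h q.2) a) by apply: zs_gen; exists a, (m h q.2).
  apply: zspan_ext (zs_add (zspan_scale q.1 H0) IH) => c.
  rewrite ev_cat ev_scale !ev_mulL' ev_cons; congr (_ * _ + _).
  by rewrite !ev_Rt; apply: ev_ext => v; rewrite mA.
have Ml dd w x : M dd x -> M dd (mulL m w x).
  apply: (zspan_map (F := fun a => mulL m w a) (Phi := fun c h => ev (fun g => c (m g h)) w)).
    by move=> c a; rewrite ev_mulL'.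
  move=> _ [a [h [Ha ->]]].
  elim: w => [|q w IH].
    by apply: zspan_ext (zs_nil _) => c; rewrite ev_mulL !ev_nil.
  have H0 : M dd (Rt m (m q.2 h) (Cj m iv q.2 a)).
    by apply: zs_gen; exists (Cj m iv q.2 a), (m q.2 h); split => //; apply: IC.
  apply: zspan_ext (zs_add (zspan_scale q.1 H0) IH) => c.
  rewrite ev_cat ev_scale !ev_mulL ev_cons; congr (_ * _ + _).
  rewrite !ev_Rt ev_Cj; apply: ev_ext => v.
  by rewrite !mA -[m (m (m q.2 v) (iv q.2)) q.2]mA mVl m1r.
have Mmul dd a b : M dd.+1 a -> M 1%N b -> M dd.+2 (mulL m a b).
  move=> Ha Hb; move: a Ha.
  apply: (zspan_map (F := fun a => mulL m a b) (Phi := fun c g => ev (fun h => c (m g h)) b)).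
    by move=> c a; rewrite ev_mulL.
  move=> _ [a0 [g [Ha0 ->]]]; move: b Hb.
  apply: (zspan_map (F := fun b => mulL m (Rt m g a0) b)
     (Phi := fun c h => ev (fun u => c (m u h)) (Rt m g a0))).
    by move=> c b; rewrite ev_mulL'.
  move=> _ [b0 [h [Hb0 ->]]].
  apply: (zspan_ext (a := Rt m (m g h) (mulL m a0 (Cj m iv g b0)))); last first.
    apply: zs_gen; exists (mulL m a0 (Cj m iv g b0)), (m g h); split => //.
    by apply: zs_gen; exists a0, (Cj m iv g b0); split => //; apply: (IC g 1%N).
  move=> c; rewrite ev_Rt !ev_mulL ev_Rt; apply: ev_ext => u.
  rewrite ev_Cj ev_Rt; apply: ev_ext => v.
  by rewrite !mA -[m (m (m (m u g) v) (iv g)) g]mA mVl m1r.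
have J1M x : J x -> M 1%N x.
  rewrite /J /Jideal /ideal_gen; apply: zspan_mono => _ [x0 [a [y0 [_ [i [hi ->]] _ ->]]]].
  apply: Ml; apply: Mr.
  pose lam := m (sg i) (iv (rh i)).
  apply: (zspan_ext (a := Rt m (rh i) [:: (1, lam); (-1, e)])); last first.
    apply: zs_gen; exists [:: (1, lam); (-1, e)], (rh i); split => //.
    apply: (zspan_ext (a := mulL m [:: (1, e)] (mulL m [:: (1, lam); (-1, e)] [:: (1, e)]))).
      by move=> c; evsimp; rewrite !m1l !m1r; ring.
    apply: zs_gen; exists [:: (1, e)], [:: (1, lam); (-1, e)], [:: (1, e)].
    split; rewrite /supp_in /= ?nu1 ?eqxx //.
    exists lam; split => //.
    by rewrite /lam hnu nuV (nuE i hi).1 (nuE i hi).2 mulgV.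
  by move=> c; evsimp; rewrite /lam -mA mVl m1r m1l.
have JM dd x : ideal_pow m J dd x -> M dd x.
  elim: dd x => [|[|dd] IH] x; [exact: J1M | exact: J1M |].
  apply: zspan_mono => _ [a [b [Ha Hb ->]]]; apply: Mmul; [exact: IH | exact: J1M].
have MO dd x : M dd x -> tens_ideal (ideal_pow m I dd) (Omega m iv nu s x).
  apply: (zspan_map (F := Omega m iv nu s) (Phi := fun c v => c (m v (iv (s (nu v))), nu v))).
    exact: ev_Omega.
  move=> _ [a [h [Ha ->]]]; have [a' [Ha' Ea]] := Irep _ _ Ha.
  pose k := m h (iv (s (nu h))).
  have kV : VP k by rewrite /VP /k hnu nuV nus mulgV.
  apply: (zspan_ext (a := tens (Rt m k a') [:: (1, nu h)])); last first.
    apply: zs_gen; exists (Rt m k a'), [:: (1, nu h)]; split => //.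
    apply: IR => //; move: Ha; rewrite /I /aug_VP /ideal_gen; apply: pow_ext => c.
    by rewrite Ea.
  move=> c; rewrite ev_tens ev_Omega !ev_Rt -Ea; apply: (ev_supp Ha') => v hv.
  by evsimp; rewrite hnu (eqP hv) mul1g /k mA; ring.
split.
- by move=> x /JM /MO.
- rewrite /tens_ideal; move=> y; elim => {y}.
  + move=> _ [a [z [Ha ->]]]; have [a' [Ha' Ea]] := Irep _ _ Ha.
    have Ha2 : ideal_pow m I d a'.
      by move: Ha; rewrite /I /aug_VP /ideal_gen; apply: pow_ext => c; rewrite Ea.
    exists (mulL m a' [seq (p.1, s p.2) | p <- z]); split.
      by apply: Jpowr; apply: IJpow.
    apply: ev_fs => c; rewrite ev_Omega ev_tens ev_mulL -Ea; apply: (ev_supp Ha') => v hv.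
    rewrite (ev_map1 _ s); apply: ev_ext => q.
    by rewrite hnu nus (eqP hv) mul1g -mA mVr m1r.
  + exists [::]; split => //; rewrite /J /Jideal /ideal_gen; exact: pow_nil.
  + move=> a b _ [x1 [Hx1 E1]] _ [x2 [Hx2 E2]]; exists (x1 ++ x2); split.
      by move: Hx1 Hx2; rewrite /J /Jideal /ideal_gen; apply: pow_add.
    have -> : Omega m iv nu s (x1 ++ x2) = Omega m iv nu s x1 ++ Omega m iv nu s x2.
      by rewrite /Omega map_cat.
    by apply: ev_fs => c; rewrite !ev_cat (fs_ev c E1) (fs_ev c E2).
  + move=> a _ [x1 [Hx1 E1]]; exists (negL x1); split.
      by move: Hx1; rewrite /J /Jideal /ideal_gen; apply: pow_neg.
    have -> : Omega m iv nu s (negL x1) = negL (Omega m iv nu s x1).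
      by rewrite /Omega /negL -!map_comp; apply: eq_map => p.
    by apply: ev_fs => c; rewrite !ev_negL (fs_ev c E1).
  + move=> a b E _ [x1 [Hx1 E1]]; exists x1; split => //; by rewrite E1.
- move=> x x' E; apply: ev_fs => c.
  have Hx y : ev c y = ev (fun p => c (m p.1 (s p.2))) (Omega m iv nu s y).
    by rewrite ev_Omega; apply: ev_ext => v /=; rewrite -mA mVl m1r.
  by rewrite !Hx (fs_ev _ E).
Qed.
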